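(* Let $\{f_n, n\in\mathbb{N}\}\subset\mathcal{L}$, where $f_n(z)=C_nz^{l_n}e^{\alpha_nz}\prod_{j\ge1}(1+\beta_j(n)z)$, and put $\mu_1(n)=\sum_{j\ge1}\beta_j(n)$. Suppose there exist $a>0$, $C>0$ and $l\in\mathbb{N}_0$ such that for all $n$: $|\alpha_n|+\mu_1(n)\le a$, $|C_n|\le C$, $l_n\le l$. Then $\{f_n\}$ is bounded in $\mathcal{A}_a$, i.e. $\sup_n\|f_n\|_b<\infty$ for every $b>a$.
   Context: $\mathcal{L}$ is the set of entire functions $f(z)=Cz^le^{\alpha z}\prod_{j\ge1}(1+\beta_jz)$ with $C\in\mathbb{C}$, $l\in\mathbb{N}_0$, $\alpha\in\mathbb{R}$, $\beta_j\ge\beta_{j+1}\ge0$, $\sum_j\beta_j<\infty$. For $b>0$, $\|f\|_b=\sup_{k\in\mathbb{N}_0}b^{-k}|f^{(k)}(0)|$; $\mathcal{A}_a$ is the set of entire $f$ with $\|f\|_b<\infty$ for all $b>a$. *)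

(* Defs.v *)
From mathcomp Require Import all_boot all_order all_algebra.
From mathcomp Require Import all_classical all_reals all_analysis.
From mathcomp Require Import complex.
Import Order.TTheory GRing.Theory Num.Theory numFieldNormedType.Exports.

Set Implicit Arguments.
Unset Strict Implicit.
Unset Printing Implicit Defensive.

Local Open Scope ring_scope.

(* The complex plane, seen as a numFieldType (hence a normed field with its
   own topology, so that [derive1] is the complex derivative). *)
Definition CC (R : realType) : numFieldType := R[i].

Definition cexp (R : realType) (z : CC R) : CC R :=
  limn (series (fun k : nat => z ^+ k / (k`!)%:R)).

Definition infprod (R : realType) (u : nat -> CC R) : CC R :=
  limn (fun N : nat => \prod_(j < N) u j).

Definition L_beta (R : realType) (beta : nat -> R) : Prop :=
  (forall j, 0 <= beta j) /\ (forall j, beta j.+1 <= beta j) /\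
  cvgn (series beta).

Definition mu1 (R : realType) (beta : nat -> R) : R := limn (series beta).

(* f(z) = C z^l e^{alpha z} prod_j (1 + beta_j z)  (index j starts at 0). *)
Definition Lclass_fun (R : realType) (C : CC R) (l : nat) (alpha : R)
    (beta : nat -> R) : CC R -> CC R :=
  fun z => C * z ^+ l * cexp ((alpha%:C)%C * z) *
           infprod (fun j => 1 + ((beta j)%:C)%C * z).

Definition normb (R : realType) (b : R) (f : CC R -> CC R) : \bar R :=
  ereal_sup [set ((b ^- k) * Normc.normc (derive1n k f 0 : R[i]))%:E | k in [set: nat]].

(* Main.v *)
Require Import Defs.
From mathcomp Require Import all_boot all_order all_algebra.
From mathcomp Require Import all_classical all_reals all_analysis.
From mathcomp Require Import complex.
From mathcomp Require Import ring lra.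
Import Order.TTheory GRing.Theory Num.Theory numFieldNormedType.Exports.
Local Open Scope ring_scope.
Local Open Scope classical_set_scope.

Section S.
Context {R : realType}.
Local Notation K := (CC R).
Local Notation nc := (@Normc.normc R).
Local Notation cre := (@complex.Re R).
Local Notation cim := (@complex.Im R).

Lemma ncE (z : R[i]) : `|z| = (nc z)%:C%C.
Proof. by case: z => x y; rewrite normc_def. Qed.

Lemma nc_ge0 (z : R[i]) : 0 <= nc z.
Proof. by case: z => x y /=; rewrite sqrtr_ge0. Qed.

Lemma ncM (x y : K) : nc (x * y) = nc x * nc y.
Proof. by apply: complexI; rewrite rmorphM -!ncE normrM. Qed.

Lemma ncD (x y : K) : nc (x + y) <= nc x + nc y.
Proof. by rewrite -lecR rmorphD -!ncE ler_normD. Qed.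

Lemma ncN (x : K) : nc (- x) = nc x.
Proof. by apply: complexI; rewrite -!ncE normrN. Qed.

Lemma ncX (x : K) n : nc (x ^+ n) = nc x ^+ n.
Proof. by apply: complexI; rewrite rmorphXn -!ncE normrX. Qed.

Lemma ncR (x : R) : nc (x%:C%C) = `|x|.
Proof. by apply: complexI; rewrite -!ncE normc_def /= expr0n /= addr0 sqrtr_sqr. Qed.

Lemma nc0 : nc (0 : K) = 0.
Proof. by apply: complexI; rewrite -!ncE normr0. Qed.

Lemma ncRe (z : R[i]) : `|cre z| <= nc z.
Proof. case: z => x y /=. rewrite -[`|x|]sqrtr_sqr ler_sqrt ?lerDl ?sqr_ge0 //. 
by rewrite addr_ge0 ?sqr_ge0. Qed.

Lemma ncIm (z : R[i]) : `|cim z| <= nc z.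
Proof. case: z => x y /=. rewrite -[`|y|]sqrtr_sqr ler_sqrt ?lerDr ?sqr_ge0 //.
by rewrite addr_ge0 ?sqr_ge0. Qed.

Lemma nc_le_ReIm (z : R[i]) : nc z <= `|cre z| + `|cim z|.
Proof.
have E : z = (cre z)%:C%C + (cim z)%:C%C * 'i%C by case: z => x y; simpc.
rewrite {1}E; apply: (le_trans (ncD _ _)); rewrite ncM !ncR.
suff -> : nc 'i%C = 1 by rewrite mulr1.
by rewrite /= expr0n /= add0r expr1n sqrtr1.
Qed.

Lemma cvgCP {T : Type} (F : set_system T) {FF : Filter F} (f : T -> K) (l : K) :
  f @ F --> l <-> forall e : R, 0 < e -> \forall t \near F, nc (l - f t) < e.
Proof.
rewrite cvgrPdist_lt; split.
  move=> H e e0; have := H (e%:C)%C; rewrite ltcR => /(_ e0).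
  by apply: filterS => t; rewrite ncE ltcR.
move=> H e; rewrite ltcE => /andP[/eqP ie re].
have Ee : e = ((cre e)%:C)%C by case: e ie re => x y /= -> .
apply: filterS (H _ re) => t; rewrite Ee ncE ltcR //.
Qed.

Lemma cre_sum (u : nat -> K) m n : cre (\sum_(m <= k < n) u k) = \sum_(m <= k < n) cre (u k).
Proof.
elim/big_rec2: _ => //= i y1 y2 _ <-.
by destruct (u i) as [a b]; destruct y2 as [c d].
Qed.

Lemma cim_sum (u : nat -> K) m n : cim (\sum_(m <= k < n) u k) = \sum_(m <= k < n) cim (u k).
Proof.
elim/big_rec2: _ => //= i y1 y2 _ <-.
by destruct (u i) as [a b]; destruct y2 as [c d].
Qed.

Lemma creB (x y : K) : cre (x - y) = cre x - cre y.
Proof. by destruct x; destruct y. Qed.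
Lemma cimB (x y : K) : cim (x - y) = cim x - cim y.
Proof. by destruct x; destruct y. Qed.

Lemma real_abs_cvg (v : nat -> R) (w : nat -> R) :
  (forall k, `|v k| <= w k) -> cvgn (series w) -> cvgn (series v).
Proof.
move=> vw cw; apply: normed_cvg.
apply: (series_le_cvg _ _ vw cw) => // k.
exact: le_trans (vw k).
Qed.

Lemma cvg_seriesC (u : nat -> K) :
  cvgn (series (fun k => nc (u k))) -> cvgn (series u).
Proof.
move=> cu.
have cr : cvgn (series (fun k => cre (u k))) by apply: real_abs_cvg cu => k; apply: ncRe.
have ci : cvgn (series (fun k => cim (u k))) by apply: real_abs_cvg cu => k; apply: ncIm.
apply/cvg_ex; exists (Complex (limn (series (fun k => cre (u k)))) (limn (series (fun k => cim (u k))))).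
apply/cvgCP => e e0.
move/cvgrPdist_lt : cr => /(_ (e/2)); rewrite divr_gt0 // => /(_ isT) cr'.
move/cvgrPdist_lt : ci => /(_ (e/2)); rewrite divr_gt0 // => /(_ isT) ci'.
near=> n.
apply: le_lt_trans (nc_le_ReIm _) _.
rewrite (splitr e); apply: ltrD.
  by rewrite creB /= /series /= cre_sum; near: n.
by rewrite cimB /= /series /= cim_sum; near: n.
Unshelve. all: by end_near.
Qed.


Lemma nc_lim_le {T : Type} (F : set_system T) {FF : ProperFilter F}
  (u : T -> K) (L : K) (B : R) :
  u @ F --> L -> (\forall t \near F, nc (u t) <= B) -> nc L <= B.
Proof.
move=> /cvgCP uL ub; apply/ler_addgt0Pr => e e0.
have [t [h1 h2]] := filter_ex (filterI (uL e e0) ub).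
have -> : L = (L - u t) + u t by rewrite subrK.
apply: (le_trans (ncD _ _)); rewrite addrC; apply: lerD => //.
exact: ltW.
Qed.

Lemma nc_sum (u : nat -> K) m n :
  nc (\sum_(m <= k < n) u k) <= \sum_(m <= k < n) nc (u k).
Proof.
rewrite -lecR -ncE rmorph_sum /=.
apply: (le_trans (ler_norm_sum _ _ _)).
by rewrite le_eqVlt; apply/orP; left; apply/eqP; apply: eq_bigr => i _; rewrite ncE.
Qed.

Lemma ncnat n : nc (n%:R : K) = n%:R.
Proof. by rewrite -(rmorph_nat (real_complex R)) ncR ger0_norm. Qed.

Lemma ncVnat n : nc ((n%:R : K)^-1) = (n%:R)^-1.
Proof. by rewrite Normc.normcV ncnat. Qed.

Definition ps (c : nat -> K) (z : K) k := c k * z ^+ k.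
Definition psum (c : nat -> K) (z : K) := limn (series (ps c z)).
Definition bnd (c : nat -> K) (M r : R) :=
  0 <= r /\ forall k, nc (c k) <= M * (r ^+ k / k`!%:R).

Lemma bnd_M0 {c M r} : bnd c M r -> 0 <= M.
Proof.
move=> [_ /(_ 0%N)]; rewrite expr0 fact0 invr1 mulr1 mulr1.
exact: le_trans (nc_ge0 _).
Qed.

Lemma exp_series_le (x : R) n : 0 <= x -> series (exp_coeff x) n <= expR x.
Proof.
move=> x0; apply: nondecreasing_cvgn_le; last exact: is_cvg_series_exp_coeff.
by apply: nondecreasing_series => k _ _; apply: exp_coeff_ge0.
Qed.

Lemma ps_norm_le {c M r} z k : bnd c M r ->
  nc (ps c z k) <= M * exp_coeff (r * nc z) k.
Proof.
move=> [r0 hc]; rewrite /ps ncM ncX /exp_coeff /= exprMn.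
have -> : M * (r ^+ k * nc z ^+ k / k`!%:R) = M * (r ^+ k / k`!%:R) * nc z ^+ k by ring.
by apply: ler_wpM2r; [rewrite exprn_ge0 // nc_ge0 | apply: hc].
Qed.

Lemma cvg_seriesMexp (M x : R) : cvgn (series (fun k => M * exp_coeff x k)).
Proof.
have := @is_cvg_seriesZ _ _ M (is_cvg_series_exp_coeff x).
by congr (cvgn (series _)).
Qed.

Lemma ps_cvg {c M r} z : bnd c M r -> cvgn (series (ps c z)).
Proof.
move=> hb; apply: cvg_seriesC.
have M0 := bnd_M0 hb; have [r0 _] := hb.
apply: (series_le_cvg _ _ _ (cvg_seriesMexp M (r * nc z))).
- by move=> k; apply: nc_ge0.
- by move=> k; apply: mulr_ge0 => //; apply: exp_coeff_ge0; rewrite mulr_ge0 // nc_ge0.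
- by move=> k; apply: ps_norm_le.
Qed.

Lemma ps_lim {c M r} z : bnd c M r -> series (ps c z) @ \oo --> psum c z.
Proof. by move=> hb; apply: ps_cvg _ hb. Qed.

Lemma ps_tail {c M r} z m : bnd c M r ->
  nc (psum c z - series (ps c z) m) <=
  M * (expR (r * nc z) - series (exp_coeff (r * nc z)) m).
Proof.
move=> hb; have M0 := bnd_M0 hb; have [r0 _] := hb.
have x0 : 0 <= r * nc z by rewrite mulr_ge0 // nc_ge0.
apply: (@nc_lim_le nat \oo _ (fun n => series (ps c z) n - series (ps c z) m)).
  by apply: cvgB; [apply: ps_lim _ hb | apply: cvg_cst].
near=> n.
have mn : (m <= n)%N by near: n; exists m.
rewrite sub_series_geq //; apply: (le_trans (nc_sum _ _ _)).
apply: (@le_trans _ _ (\sum_(m <= k < n) M * exp_coeff (r * nc z) k)).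
  by apply: ler_sum => k _; apply: ps_norm_le.
rewrite -mulr_sumr; apply: ler_wpM2l => //.
rewrite -sub_series_geq //; apply: lerB => //; exact: exp_series_le.
Unshelve. all: by end_near.
Qed.

Lemma series_cvg_fin (u : nat -> nat -> K) (v : nat -> K) m :
  (forall k, (fun N => u N k) @ \oo --> v k) ->
  (fun N => series (u N) m) @ \oo --> series v m.
Proof.
move=> huv; elim: m => [|m IH].
  have -> : (fun N => series (u N) 0) = (fun _ => 0).
    by apply: funext => N; rewrite /series /= big_geq.
  have -> : series v 0 = 0 by rewrite /series /= big_geq.
  exact: cvg_cst.
have -> : (fun N => series (u N) m.+1) = (fun N => series (u N) m + u N m).
  by apply: funext => N; rewrite seriesSr.
by rewrite seriesSr; exact: (cvgD IH (huv m)).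
Qed.

Lemma tannery (cs : nat -> nat -> K) (c : nat -> K) M r z :
  (forall N, bnd (cs N) M r) -> (forall k, (fun N => cs N k) @ \oo --> c k) ->
  bnd c M r /\ (fun N => psum (cs N) z) @ \oo --> psum c z.
Proof.
move=> hb hc.
have hbc : bnd c M r.
  have [r0 _] := hb 0%N; split => // k.
  apply: (@nc_lim_le nat \oo _ _ _ _ (hc k)).
  by apply: nearW => N; have [_ ] := hb N; apply.
split => //.
have M0 := bnd_M0 hbc; have [r0 _] := hbc.
set x := r * nc z.
have x0 : 0 <= x by rewrite mulr_ge0 // nc_ge0.
apply/cvgCP => e e0.
have tail0 : (fun m => M * (expR x - series (exp_coeff x) m)) @ \oo --> 0.
  rewrite -(mulr0 M); apply: cvgMr.
  rewrite -(subrr (expR x)); apply: cvgB; first exact: cvg_cst.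
  exact: is_cvg_series_exp_coeff.
have e3 : 0 < e / 3 by rewrite divr_gt0.
move/cvgrPdist_lt : tail0 => /(_ _ e3) tl.
have [m hm] := filter_ex tl.
rewrite sub0r normrN in hm.
have hm' : M * (expR x - series (exp_coeff x) m) < e / 3 := le_lt_trans (ler_norm _) hm.
have fin : (fun N => series (ps (cs N) z) m) @ \oo --> series (ps c z) m.
  apply: series_cvg_fin => k; rewrite /ps.
  by apply: cvgM => //; apply: cvg_cst.
move/cvgCP : fin => /(_ _ e3) fin.
near=> N.
have h1 := ps_tail z m hbc.
have h2 := ps_tail z m (hb N).
have h3 : nc (series (ps c z) m - series (ps (cs N) z) m) < e / 3 by near: N.
have -> : psum c z - psum (cs N) z =
  (psum c z - series (ps c z) m) + (series (ps c z) m - series (ps (cs N) z) m)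
  - (psum (cs N) z - series (ps (cs N) z) m).
  by ring.
apply: (le_lt_trans (ncD _ _)); rewrite ncN.
apply: (le_lt_trans (lerD (ncD _ _) (lexx _))).
have -> : e = e / 3 + e / 3 + e / 3 by field.
apply: ltr_leD; first apply: ler_ltD => //.
- exact: (le_trans h1 (ltW hm')).
- exact: (le_trans h2 (ltW hm')).
Unshelve. all: by end_near.
Qed.

End S.


Section S.
Context {R : realType}.
Local Notation K := (CC R).
Local Notation nc := (@Normc.normc R).
Local Notation cre := (@complex.Re R).
Local Notation cim := (@complex.Im R).

Definition shiftc (c : nat -> K) k : K := if k is k'.+1 then c k' else 0.
Definition mlin (b : K) (c : nat -> K) k : K := c k + b * shiftc c k.

Lemma series_shift c z n : series (ps (shiftc c) z) n.+1 = z * series (ps c z) n.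
Proof.
elim: n => [|n IH].
  by rewrite /series /= big_nat1 big_geq // /ps /= mul0r mulr0.
rewrite seriesSr IH seriesSr mulrDr /ps /= exprS; ring.
Qed.

Lemma shift_lim c z (L : K) : series (ps c z) @ \oo --> L ->
  series (ps (shiftc c) z) @ \oo --> z * L.
Proof.
move=> hL; rewrite -cvg_shiftS.
have -> : [sequence series (ps (shiftc c) z) n.+1]_n = (fun n => z * series (ps c z) n).
  by apply: funext => n; rewrite /= series_shift.
exact: cvgMr.
Qed.

Lemma mlin_lim b c z (L : K) : series (ps c z) @ \oo --> L ->
  series (ps (mlin b c) z) @ \oo --> L * (1 + b * z).
Proof.
move=> hL.
have -> : series (ps (mlin b c) z) =
    (fun n => series (ps c z) n + b * series (ps (shiftc c) z) n).
  apply: funext => n; rewrite /series /= big_distrr -big_split /=.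
  by apply: eq_bigr => k _; rewrite /ps /mlin; ring.
have -> : L * (1 + b * z) = L + b * (z * L) by ring.
have h2 := shift_lim _ _ _ hL.
have h3 : (fun n => b * series (ps (shiftc c) z) n) @ \oo --> b * (z * L).
  exact: cvgMr.
exact: (cvgD hL h3).
Qed.

End S.


Section S.
Context {R : realType}.
Local Notation K := (CC R).
Local Notation nc := (@Normc.normc R).
Local Notation cre := (@complex.Re R).
Local Notation cim := (@complex.Im R).

Lemma bern (s t : R) n : 0 <= s -> 0 <= t ->
  s ^+ n.+1 + n.+1%:R * t * s ^+ n <= (s + t) ^+ n.+1.
Proof.
move=> s0 t0; elim: n => [|n IH]; first by rewrite expr0 expr1 mulr1 mul1r.
apply: le_trans (ler_wpM2l (addr_ge0 s0 t0) IH).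
have E : (s + t) * (s ^+ n.+1 + n.+1%:R * t * s ^+ n) =
   s ^+ n.+2 + n.+2%:R * t * s ^+ n.+1 + n.+1%:R * t ^+ 2 * s ^+ n.
  rewrite !exprS -[n.+2]addn1 natrD; ring.
rewrite E lerDl; apply: mulr_ge0; first by rewrite mulr_ge0 // exprn_ge0.
by rewrite exprn_ge0.
Qed.

Lemma mlin_bnd b c (s t : R) : bnd c 1 s -> 0 <= t -> nc b <= t ->
  bnd (mlin b c) 1 (s + t).
Proof.
move=> [s0 hc] t0 hb; split; first by rewrite addr_ge0.
case=> [|m].
  rewrite /mlin /shiftc mulr0 addr0; apply: le_trans (hc 0%N) _.
  by rewrite !expr0.
rewrite /mlin /=; apply: (le_trans (ncD _ _)); rewrite ncM mul1r.
have h1 := hc m.+1; rewrite mul1r in h1.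
have h2 : nc b * nc (c m) <= t * (s ^+ m / m`!%:R).
  apply: ler_pM; rewrite ?nc_ge0 //; by have := hc m; rewrite mul1r.
apply: (le_trans (lerD h1 h2)).
have f0 : (0 < m`!%:R :> R) by rewrite ltr0n fact_gt0.
have e : s ^+ m.+1 / m.+1`!%:R + t * (s ^+ m / m`!%:R) =
   (s ^+ m.+1 + m.+1%:R * t * s ^+ m) / m.+1`!%:R.
  rewrite factS natrM; field.
  by rewrite (gt_eqF f0) /= addrC natr1 pnatr_eq0.
rewrite e; apply: ler_wpM2r; first by rewrite invr_ge0 ler0n.
exact: bern.
Qed.

Lemma bnd_mono (c : nat -> K) (M r r' : R) : bnd c M r -> r <= r' -> bnd c M r'.
Proof.
move=> hb rr; have M0 := bnd_M0 hb; have [r0 hc] := hb.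
split; first exact: le_trans rr.
move=> k; apply: (le_trans (hc k)); apply: ler_wpM2l => //.
apply: ler_wpM2r; first by rewrite invr_ge0 ler0n.
by apply: lerXn2r; rewrite ?nnegrE // (le_trans r0 rr).
Qed.

Definition ec (al : R) k : K := ((al%:C)%C) ^+ k / k`!%:R.

Lemma ec_bnd al : bnd (ec al) 1 `|al|.
Proof.
split => // k; rewrite mul1r /ec ncM ncX ncR ncVnat //.
Qed.

Lemma ec_psum al z : psum (ec al) z = cexp ((al%:C)%C * z).
Proof.
rewrite /psum /cexp; congr (limn (series _)); apply: funext => k.
by rewrite /ps /ec exprMn; ring.
Qed.

Definition del k : K := if k is 0 then 1 else 0.

Lemma nc1 : nc (1 : K) = 1.
Proof. by apply: complexI; rewrite -ncE normr1. Qed.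

Lemma del_bnd : bnd del 1 0.
Proof.
split => // -[|k]; first by rewrite /del nc1 expr0 mul1r divr1 ?fact0.
by rewrite /del nc0 mul1r expr0n /= mul0r.
Qed.

Lemma del_lim z : series (ps del z) @ \oo --> (1 : K).
Proof.
rewrite -cvg_shiftS.
have -> : [sequence series (ps del z) n.+1]_n = (fun _ => 1).
  apply: funext => n /=; elim: n => [|n IH].
    by rewrite /series /= big_nat1 /ps /del expr0 mulr1.
  by rewrite seriesSr IH /ps /del /= mul0r addr0.
exact: cvg_cst.
Qed.

Fixpoint itc (c0 : nat -> K) (be : nat -> R) N : nat -> K :=
  match N with 0 => c0 | N'.+1 => mlin ((be N')%:C)%C (itc c0 be N') end.

Lemma itc_lim (c0 : nat -> K) (be : nat -> R) z (L : K) N : series (ps c0 z) @ \oo --> L ->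
  series (ps (itc c0 be N) z) @ \oo --> L * \prod_(j < N) (1 + ((be j)%:C)%C * z).
Proof.
move=> h; elim: N => [|N IH]; first by rewrite big_ord0 mulr1.
by rewrite big_ord_recr /= mulrA; apply: mlin_lim.
Qed.

Lemma itc_bnd (c0 : nat -> K) (s0 : R) (be : nat -> R) N : bnd c0 1 s0 -> (forall j, 0 <= be j) ->
  bnd (itc c0 be N) 1 (s0 + \sum_(j < N) be j).
Proof.
move=> h0 hbe; elim: N => [|N IH]; first by rewrite big_ord0 addr0.
rewrite big_ord_recr /= addrA; apply: mlin_bnd => //.
by rewrite ncR ger0_norm.
Qed.

Lemma itc_cvg (c0 : nat -> K) (s0 : R) (be : nat -> R) (a : R) (k : nat) : bnd c0 1 s0 -> (forall j, 0 <= be j) ->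
  cvgn (series be) -> (forall N, s0 + \sum_(j < N) be j <= a) ->
  cvgn (fun N => itc c0 be N k).
Proof.
move=> h0 hbe cbe hN.
set u := fun N => itc c0 be N k.
have hb N : bnd (itc c0 be N) 1 a by exact: bnd_mono (itc_bnd _ _ _ N h0 hbe) (hN N).
have [a0 _] := hb 0%N.
set B : R := a ^+ k.-1 / (k.-1)`!%:R.
have B0 : 0 <= B by rewrite /B mulr_ge0 ?invr_ge0 ?exprn_ge0.
have tel j : nc (telescope u j) <= be j * B.
  have -> : telescope u j = ((be j)%:C)%C * shiftc (itc c0 be j) k.
    by rewrite /telescope /u /= /mlin addrAC subrr add0r.
  rewrite ncM ncR ger0_norm //; apply: ler_wpM2l => //.
  case: k @B {u B0} => [|k']; rewrite /shiftc; first by rewrite nc0 mulr_ge0 ?invr_ge0 ?exprn_ge0.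
  by have [_ /(_ k')] := hb j; rewrite mul1r.
have cs : cvgn (series (telescope u)).
  apply: cvg_seriesC.
  apply: (series_le_cvg (v_ := fun j => B * be j)).
  - by move=> j; apply: nc_ge0.
  - by move=> j; rewrite mulr_ge0.
  - by move=> j; rewrite mulrC.
  have := @is_cvg_seriesZ _ _ B cbe.
  by congr (cvgn (series _)).
have -> : u = (fun N => u 0%N + series (telescope u) N).
  by apply: funext => N; rewrite -eq_sum_telescope.
apply/cvg_ex; exists (u 0%N + limn (series (telescope u))).
by apply: cvgD; [exact: cvg_cst | exact: cs].
Qed.

Lemma binom_le (a b : R) k m : 0 <= a -> a < b -> (m <= k)%N ->
  a ^+ (k - m) / (k - m)`!%:R <= (m`!%:R / (b - a) ^+ m) * (b ^+ k / k`!%:R).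
Proof.
move=> a0 ab mk.
have ba : 0 < b - a by rewrite subr_gt0.
have hb : b = a + (b - a) by rewrite addrC subrK.
have T : a ^+ (k - m) * (b - a) ^+ m *+ 'C(k, m) <= b ^+ k.
  rewrite [X in _ <= X ^+ _]hb [X in _ <= X]exprDn.
  have mk1 : (m < k.+1)%N by [].
  rewrite (bigD1 (Ordinal mk1)) //= lerDl.
  by apply: sumr_ge0 => i _; rewrite mulrn_wge0 // mulr_ge0 // exprn_ge0 // ltW.
have F : k`!%:R = ('C(k, m) * (m`! * (k - m)`!))%:R :> R by rewrite bin_fact.
have f1 : 0 < (k - m)`!%:R :> R by rewrite ltr0n fact_gt0.
have f2 : 0 < m`!%:R :> R by rewrite ltr0n fact_gt0.
have f3 : 0 < 'C(k, m)%:R :> R by rewrite ltr0n bin_gt0.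
have p0 : 0 < (b - a) ^+ m by rewrite exprn_gt0.
rewrite F !natrM.
rewrite -mulr_natr in T.
set A := a ^+ (k - m) in T *; set P := (b - a) ^+ m in T p0 *.
set Cb := 'C(k, m)%:R in T f3 *; set fm := m`!%:R in f2 *; set fk := (k - m)`!%:R in f1 *.
have -> : fm / P * (b ^+ k / (Cb * (fm * fk))) = b ^+ k / (P * Cb * fk).
  by field; rewrite !gt_eqF.
have -> : A / fk = (A * P * Cb) / (P * Cb * fk).
  by field; rewrite !gt_eqF.
apply: ler_wpM2r => //; rewrite invr_ge0 ltW // !mulr_gt0 //.
Qed.

End S.


Section S.
Context {R : realType}.
Local Notation K := (CC R).
Local Notation nc := (@Normc.normc R).
Local Notation cre := (@complex.Re R).
Local Notation cim := (@complex.Im R).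


Definition Dk (h z : K) k : K := (h + z) ^+ k - z ^+ k - h * (k%:R * z ^+ k.-1).

Lemma Dk_gen0 (T : comNzRingType) (h z : T) :
  (h + z) ^+ 1 - z ^+ 1 - h * (1%:R * z ^+ 0) =
  (h + z) * ((h + z) ^+ 0 - z ^+ 0 - h * (0%:R * z ^+ 0)) + h ^+ 2 * (0%:R * z ^+ 0).
Proof. ring. Qed.

Lemma Dk_genS (T : comNzRingType) (h z : T) m :
  (h + z) ^+ m.+2 - z ^+ m.+2 - h * (m.+2%:R * z ^+ m.+1) =
  (h + z) * ((h + z) ^+ m.+1 - z ^+ m.+1 - h * (m.+1%:R * z ^+ m)) + h ^+ 2 * (m.+1%:R * z ^+ m).
Proof.
rewrite [(h + z) ^+ m.+2]exprS [z ^+ m.+2]exprS [z ^+ m.+1]exprS.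
rewrite -[m.+2]addn1 -[m.+1]addn1 !natrD; ring.
Qed.

Lemma Dk_rec h z k : Dk h z k.+1 = (h + z) * Dk h z k + h ^+ 2 * (k%:R * z ^+ k.-1).
Proof. by case: k => [|m]; [exact: Dk_gen0 | exact: Dk_genS]. Qed.

Lemma nc_kz (z : K) k : nc (k%:R * z ^+ k.-1) <= (2 * (nc z + 1)) ^+ k.
Proof.
have r0 := nc_ge0 z.
rewrite ncM ncnat ncX exprMn.
apply: ler_pM; rewrite ?ler0n ?exprn_ge0 //.
  have := ltn_expl k (isT : (1 < 2)%N); rewrite -(ltr_nat R) natrX => /ltW.
  done.
case: k => [|m] /=; first by rewrite !expr0.
apply: le_trans (_ : (nc z + 1) ^+ m <= _).
  by apply: lerXn2r; rewrite ?nnegrE ?addr_ge0 // lerDl.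
rewrite exprS ler_peMl ?exprn_ge0 ?addr_ge0 // lerDr //.
Qed.

Lemma Dk_le h z k : nc h <= 1 ->
  nc (Dk h z k) <= nc h ^+ 2 * (4 * (nc z + 1)) ^+ k.
Proof.
move=> h1; have r0 := nc_ge0 z; have e0 := nc_ge0 h.
set Q := 4 * (nc z + 1).
have Q0 : 0 <= Q by rewrite mulr_ge0 // addr_ge0.
elim: k => [|k IH].
  by rewrite /Dk !expr0 subrr mul0r mulr0 subr0 nc0 mulr_ge0 // exprn_ge0.
rewrite Dk_rec; apply: (le_trans (ncD _ _)).
have hz : nc (h + z) <= nc z + 1 by apply: (le_trans (ncD _ _)); rewrite addrC lerD2l.
have A : nc ((h + z) * Dk h z k) <= (nc z + 1) * (nc h ^+ 2 * Q ^+ k).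
  by rewrite ncM; apply: ler_pM; rewrite ?nc_ge0.
have B : nc (h ^+ 2 * (k%:R * z ^+ k.-1)) <= nc h ^+ 2 * Q ^+ k.
  rewrite ncM ncX; apply: ler_wpM2l; first by rewrite exprn_ge0.
  apply: (le_trans (nc_kz z k)); apply: lerXn2r; rewrite ?nnegrE ?mulr_ge0 ?addr_ge0 //.
  by rewrite ler_wpM2r ?addr_ge0 // ler_nat.
apply: (le_trans (lerD A B)).
have Qk : 0 <= nc h ^+ 2 * Q ^+ k by rewrite mulr_ge0 ?exprn_ge0.
have -> : nc h ^+ 2 * Q ^+ k.+1 = Q * (nc h ^+ 2 * Q ^+ k) by rewrite [Q ^+ k.+1]exprS mulrCA.
set W := nc h ^+ 2 * Q ^+ k in Qk *.
rewrite -subr_ge0.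
have -> : Q * W - ((nc z + 1) * W + W) = (3 * nc z + 2) * W by rewrite /Q; ring.
by rewrite mulr_ge0 // addr_ge0 // mulr_ge0.
Qed.

Definition dc (c : nat -> K) k : K := k.+1%:R * c k.+1.

Lemma dc_bnd {c M r} : bnd c M r -> bnd (dc c) (M * r) r.
Proof.
move=> hb; have M0 := bnd_M0 hb; have [r0 hc] := hb; split => // k.
rewrite /dc ncM ncnat.
apply: le_trans (ler_wpM2l (ler0n _ _) (hc k.+1)) _.
have f0 : (k`!%:R : R) != 0 by rewrite pnatr_eq0 -lt0n fact_gt0.
have -> : k.+1%:R * (M * (r ^+ k.+1 / k.+1`!%:R)) = M * r * (r ^+ k / k`!%:R).
  rewrite factS natrM exprS; field.
  by rewrite f0 /= addrC natr1 pnatr_eq0.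
by [].
Qed.

Lemma G0 (T : comNzRingType) (h cc X Y : T) :
  cc * X - cc * Y - h * 0 = cc * (X - Y - h * (0%:R * 1)).
Proof. ring. Qed.

Lemma G1 (T : comNzRingType) (A B C h cc X Y Z N : T) :
  (A + cc * X) - (B + cc * Y) - h * (C + N * cc * Z) = (A - B - h * C) + cc * (X - Y - h * (N * Z)).
Proof. ring. Qed.

Lemma T_eq c h z n :
  series (ps c (h + z)) n.+1 - series (ps c z) n.+1 - h * series (ps (dc c) z) n =
  \sum_(0 <= k < n.+1) c k * Dk h z k.
Proof.
elim: n => [|n IH].
  rewrite /series /= !big_nat1 big_geq // /ps /Dk !expr0.
  exact: G0.
rewrite [in RHS]big_nat_recr //= -IH.
rewrite [series (ps c (h + z)) _]seriesSr [series (ps c z) n.+2]seriesSr [series (ps (dc c) z) _]seriesSr.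
rewrite /ps /dc /Dk.
exact: G1.
Qed.

Lemma G3 (T : fieldType) (G A B h : T) : h != 0 ->
  G - h^-1 * (A - B) = - (h^-1 * (A - B - h * G)).
Proof. by move=> hn; field. Qed.

End S.


Section S.
Context {R : realType}.
Local Notation K := (CC R).
Local Notation nc := (@Normc.normc R).
Local Notation cre := (@complex.Re R).
Local Notation cim := (@complex.Im R).


Lemma ps_deriv {c : nat -> K} {M r : R} (z : K) : bnd c M r -> derive1 (psum c) z = psum (dc c) z.
Proof.
move=> hb; have hd := dc_bnd hb; have M0 := bnd_M0 hb; have [r0 hc] := hb.
rewrite /derive1; apply: cvg_lim => //.
apply/cvgCP => e e0.
set Q := 4 * (nc z + 1).
have Q0 : 0 <= Q by rewrite mulr_ge0 // addr_ge0 // nc_ge0.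
set S := M * expR (r * Q).
have S0 : 0 <= S by rewrite mulr_ge0 // expR_ge0.
set d := Num.min 1 (e / (S + 1)).
have d0 : 0 < d by rewrite lt_min ltr01 divr_gt0 // ltr_wpDl.
have hdn : \forall h \near (0 : K)^', nc h < d.
  have := @dnbhs0_lt _ K (d%:C)%C; rewrite ltcR => /(_ d0).
  by apply: filterS => x; rewrite ncE ltcR.
have hne := nbhs_dnbhs_neq (0 : K).
near=> h.
have hn0 : h != 0 by near: h.
have hlt : nc h < d by near: h.
have d1 : d <= 1 by rewrite /d ge_min lexx.
have d2 : d <= e / (S + 1) by rewrite /d ge_min lexx orbT.
have h1 : nc h <= 1 by apply: ltW (lt_le_trans hlt d1).
set Nh := psum c (h + z) - psum c z - h * psum (dc c) z.
have E : psum (dc c) z - h^-1 *: (psum c (h + z) - psum c z) = - (h^-1 * Nh).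
  exact: G3.
rewrite E ncN ncM Normc.normcV.
have NB : nc Nh <= nc h ^+ 2 * S.
  apply: (@nc_lim_le _ nat \oo _ (fun n => series (ps c (h + z)) n.+1 - series (ps c z) n.+1
      - h * series (ps (dc c) z) n) Nh (nc h ^+ 2 * S)).
    apply: cvgB; first apply: cvgB.
    - by rewrite (cvg_shiftS (series (ps c (h + z)))); exact: ps_lim hb.
    - by rewrite (cvg_shiftS (series (ps c z))); exact: ps_lim hb.
    - by apply: cvgMr; exact: ps_lim hd.
  apply: nearW => n; rewrite T_eq.
  apply: (le_trans (nc_sum _ _ _)).
  apply: (@le_trans _ _ (\sum_(0 <= k < n.+1) nc h ^+ 2 * (M * exp_coeff (r * Q) k))).
    apply: ler_sum => k _; rewrite ncM.
    apply: le_trans (ler_wpM2l (nc_ge0 _) (Dk_le h z k h1)) _.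
    rewrite mulrC -mulrA; apply: ler_wpM2l; first by rewrite exprn_ge0 // nc_ge0.
    have -> : M * exp_coeff (r * Q) k = M * (r ^+ k / k`!%:R) * Q ^+ k.
      by rewrite /exp_coeff /= exprMn; ring.
    rewrite mulrC; apply: ler_wpM2r; first by rewrite exprn_ge0.
    exact: hc.
  rewrite -mulr_sumr; apply: ler_wpM2l; first by rewrite exprn_ge0 // nc_ge0.
  rewrite -mulr_sumr /S; apply: ler_wpM2l => //.
  exact: exp_series_le (mulr_ge0 r0 Q0).
have hpos : 0 < nc h.
  rewrite lt_neqAle nc_ge0 andbT eq_sym; apply/negP => /eqP /Normc.eq0_normc h0.
  by rewrite h0 eqxx in hn0.
have H1 : (nc h)^-1 * nc Nh <= (nc h)^-1 * (nc h ^+ 2 * S).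
  by apply: ler_wpM2l => //; rewrite invr_ge0 nc_ge0.
apply: le_lt_trans H1 _.
have -> : (nc h)^-1 * (nc h ^+ 2 * S) = nc h * S by field; rewrite gt_eqF.
have H2 : nc h * S <= nc h * (S + 1) by apply: ler_wpM2l; [exact: nc_ge0 | rewrite lerDl].
apply: le_lt_trans H2 _.
have : nc h < e / (S + 1) := lt_le_trans hlt d2.
by rewrite ltr_pdivlMr // ltr_wpDl.
Unshelve. all: by end_near.
Qed.

End S.


Section S.
Context {R : realType}.
Local Notation K := (CC R).
Local Notation nc := (@Normc.normc R).
Local Notation cre := (@complex.Re R).
Local Notation cim := (@complex.Im R).


Lemma psum0 (c : nat -> K) : psum c 0 = c 0%N.
Proof.
rewrite /psum; apply: cvg_lim => //.
rewrite -cvg_shiftS.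
have -> : [sequence series (ps c 0) n.+1]_n = (fun _ => c 0%N).
  apply: funext => n /=; elim: n => [|n IH].
    by rewrite /series /= big_nat1 /ps expr0 mulr1.
  by rewrite seriesSr IH /ps exprS mul0r mulr0 addr0.
exact: cvg_cst.
Qed.

Lemma derive1n_psum k : forall (c : nat -> K) (M r : R), bnd c M r ->
  derive1n k (psum c) 0 = k`!%:R * c k.
Proof.
elim: k => [|k IH] c M r hb.
  by rewrite derive1n0 psum0 fact0 mul1r.
rewrite /derive1n iterSr.
have -> : derive1 (psum c) = psum (dc c) by apply: funext => z; exact: ps_deriv z hb.
rewrite -/(derive1n k (psum (dc c))) (IH _ _ _ (dc_bnd hb)).
by rewrite /dc factS natrM mulrA [_ * k.+1%:R]mulrC.
Qed.

Lemma shiftnE m (c : nat -> K) k :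
  iter m shiftc c k = if (m <= k)%N then c (k - m)%N else 0.
Proof.
elim: m k => [|m IH] k; first by rewrite subn0.
rewrite iterS; case: k => [|k]; first by [].
by rewrite /shiftc IH ltnS subSS.
Qed.

Lemma shiftn_lim m (c : nat -> K) z (L : K) : series (ps c z) @ \oo --> L ->
  series (ps (iter m shiftc c) z) @ \oo --> z ^+ m * L.
Proof.
move=> h; elim: m => [|m IH]; first by rewrite expr0 mul1r.
by rewrite iterS exprS -mulrA; apply: shift_lim.
Qed.

Lemma scale_lim (C0 : K) (c : nat -> K) z (L : K) : series (ps c z) @ \oo --> L ->
  series (ps (fun k => C0 * c k) z) @ \oo --> C0 * L.
Proof.
move=> h.
have -> : series (ps (fun k => C0 * c k) z) = (fun n => C0 * series (ps c z) n).
  apply: funext => n; rewrite /series /= big_distrr /=.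
  by apply: eq_bigr => k _; rewrite /ps mulrA.
exact: cvgMr.
Qed.

Lemma final_bnd (C0 : K) (C : R) (c : nat -> K) (a b : R) m l :
  nc C0 <= C -> bnd c 1 a -> a < b -> (m <= l)%N ->
  bnd (fun k => C0 * iter m shiftc c k) (C * (l`!%:R * (1 + (b - a)^-1) ^+ l)) b.
Proof.
move=> hC [a0 hc] ab ml.
have ba : 0 < b - a by rewrite subr_gt0.
have C0' : 0 <= C := le_trans (nc_ge0 _) hC.
have V0 : 0 < (b - a)^-1 by rewrite invr_gt0.
have Ml : m`!%:R / (b - a) ^+ m <= l`!%:R * (1 + (b - a)^-1) ^+ l.
  rewrite -exprVn; apply: ler_pM.
  - exact: ler0n.
  - by rewrite exprn_ge0 // ltW.
  - by rewrite ler_nat leq_fact.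
  apply: (@le_trans _ _ ((1 + (b - a)^-1) ^+ m)).
    apply: lerXn2r.
    - by rewrite nnegrE ltW.
    - by rewrite nnegrE addr_ge0 // ltW.
    - by rewrite lerDr.
  by rewrite ler_eXn2l // ltrDl.
split; first by apply: ltW; apply: le_lt_trans ab.
move=> k; rewrite ncM shiftnE.
have B0 : 0 <= b by apply: ltW; apply: le_lt_trans ab.
have MM : 0 <= C * (l`!%:R * (1 + (b - a)^-1) ^+ l).
  by rewrite mulr_ge0 // mulr_ge0 // exprn_ge0 // addr_ge0 // ltW.
have bk : 0 <= b ^+ k / k`!%:R by rewrite mulr_ge0 ?invr_ge0 ?exprn_ge0.
case: ifP => mk; last by rewrite nc0 mulr0 mulr_ge0.
rewrite -mulrA; apply: ler_pM; rewrite ?nc_ge0 //.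
apply: (le_trans (hc _)); rewrite mul1r.
apply: (le_trans (binom_le _ _ _ _ a0 ab mk)).
by apply: ler_wpM2r.
Qed.

End S.


Lemma limE {R : realType} (u : nat -> CC R) (l : CC R) : u @ \oo --> l -> limn u = l.
Proof. by move=> h; apply: cvg_lim. Qed.

Theorem proposition1p3 (R : realType)
    (Cn : nat -> CC R) (ln : nat -> nat) (alphan : nat -> R)
    (betan : nat -> nat -> R)
    (hbeta : forall n, L_beta (betan n))
    (a C : R) (l : nat) (ha : 0 < a) (hC : 0 < C)
    (hab : forall n, `|alphan n| + mu1 (betan n) <= a)
    (hCn : forall n, Normc.normc (Cn n : R[i]) <= C)
    (hln : forall n, (ln n <= l)%N) :
  forall b : R, a < b ->
    exists M : R, forall n : nat,
      (normb b (Lclass_fun (Cn n) (ln n) (alphan n) (betan n)) <= M%:E)%E.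
Proof.
move=> b ab.
exists (C * (l`!%:R * (1 + (b - a)^-1) ^+ l)) => n.
set M := C * (l`!%:R * (1 + (b - a)^-1) ^+ l).
set al := alphan n; set be := betan n.
have [be0 [_ cbe]] := hbeta n.
have hsum N : `|al| + \sum_(j < N) be j <= a.
  apply: le_trans (hab n); rewrite lerD2l.
  have := nondecreasing_cvgn_le (nondecreasing_series (fun k _ _ => be0 k)) cbe N.
  by rewrite /mu1 /series /= big_mkord.
have hsum0 N : 0 + \sum_(j < N) be j <= a.
  by apply: le_trans (hsum N); rewrite add0r lerDr.
have hE N : bnd (itc (ec al) be N) 1 a.
  exact: bnd_mono (itc_bnd _ _ _ N (ec_bnd al) be0) (hsum N).
have hP N : bnd (itc del be N) 1 a.
  exact: bnd_mono (itc_bnd _ _ _ N del_bnd be0) (hsum0 N).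
set cE := fun k => limn (fun N => itc (ec al) be N k).
set cP := fun k => limn (fun N => itc del be N k).
have cEc k : (fun N => itc (ec al) be N k) @ \oo --> cE k.
  exact: (itc_cvg (ec al) `|al| be a k (ec_bnd al) be0 cbe hsum).
have cPc k : (fun N => itc del be N k) @ \oo --> cP k.
  exact: (itc_cvg del 0 be a k del_bnd be0 cbe hsum0).
have bE : bnd cE 1 a by have [] := tannery _ _ _ _ 0 hE cEc.
have key z : cexp ((al%:C)%C * z) * infprod (fun j => 1 + ((be j)%:C)%C * z) = psum cE z.
  have [_ tE] := tannery _ _ _ _ z hE cEc.
  have [_ tP] := tannery _ _ _ _ z hP cPc.
  have eP N : psum (itc del be N) z = \prod_(j < N) (1 + ((be j)%:C)%C * z).
    have L := itc_lim del be z _ N (del_lim z); rewrite mul1r in L.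
    exact: limE L.
  have eE N : psum (itc (ec al) be N) z =
      cexp ((al%:C)%C * z) * \prod_(j < N) (1 + ((be j)%:C)%C * z).
    rewrite -ec_psum; apply: limE; apply: itc_lim; exact: ps_lim z (ec_bnd al).
  have prodc : (fun N => \prod_(j < N) (1 + ((be j)%:C)%C * z)) @ \oo --> psum cP z.
    have <- : (fun N => psum (itc del be N) z) = (fun N => \prod_(j < N) (1 + ((be j)%:C)%C * z)).
      by apply: funext => N; exact: eP.
    exact: tP.
  have inf : infprod (fun j => 1 + ((be j)%:C)%C * z) = psum cP z.
    exact: limE prodc.
  rewrite inf.
  have l1 : (fun N => psum (itc (ec al) be N) z) @ \oo --> cexp ((al%:C)%C * z) * psum cP z.
    have -> : (fun N => psum (itc (ec al) be N) z) =
        (fun N => cexp ((al%:C)%C * z) * \prod_(j < N) (1 + ((be j)%:C)%C * z)).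
      by apply: funext => N; exact: eE.
    exact: cvgMr prodc.
  have u1 : limn (fun N => psum (itc (ec al) be N) z) = cexp ((al%:C)%C * z) * psum cP z.
    exact: limE l1.
  have u2 : limn (fun N => psum (itc (ec al) be N) z) = psum cE z.
    exact: limE tE.
  by rewrite -u1 u2.
set d := fun k => Cn n * iter (ln n) shiftc cE k.
have hd : bnd d M b := final_bnd _ _ _ _ _ _ _ (hCn n) bE ab (hln n).
have Fd : Lclass_fun (Cn n) (ln n) al be = psum d.
  apply: funext => z; rewrite /Lclass_fun -mulrA key.
  apply/esym; apply: limE.
  rewrite -mulrA; apply: scale_lim; apply: shiftn_lim; exact: ps_lim z bE.
rewrite Fd; apply: ge_ereal_sup => y [k _ <-]; rewrite lee_fin.
rewrite (derive1n_psum k _ _ _ hd) ncM ncnat.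
have [b0 hdk] := hd.
have bp : 0 < b by apply: lt_trans ab.
have fk : 0 < k`!%:R :> R by rewrite ltr0n fact_gt0.
apply: (@le_trans _ _ (b ^- k * (k`!%:R * (M * (b ^+ k / k`!%:R))))).
  apply: ler_wpM2l; first by rewrite invr_ge0 exprn_ge0.
  by apply: ler_wpM2l => //; exact: hdk.
have -> : b ^- k * (k`!%:R * (M * (b ^+ k / k`!%:R))) = M.
  field. Show. by rewrite ?(gt_eqF bp) ?(gt_eqF fk) ?expf_neq0 ?(gt_eqF bp).
by [].
Qed.
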